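(* Let $r\in\mathbb{R}$. For all integers $n,m,k \geq 0$ with $n \geq m+k$, \[ \binom{m+k}{m} S_{2,r}(n,m+k) = \sum_{l=m}^n \binom{n}{l} S_{2,r}(l,m)\, S_{2,r}(n-l,k). \]
   Context: For $r\in\mathbb{R}$ and integer $k\ge 0$, the extended Stirling numbers of the second kind $S_{2,r}(n,k)$ are defined by \[ \frac{1}{k!}(e^t-1+rt)^k = \sum_{n=k}^\infty S_{2,r}(n,k)\frac{t^n}{n!}, \] with $S_{2,r}(a,b)=0$ whenever $a<b$. *)

(* Defs.v *)
From mathcomp Require Import all_boot all_order all_algebra.
Set Implicit Arguments. Unset Strict Implicit. Unset Printing Implicit Defensive.
Import Order.TTheory GRing.Theory Num.Theory.
Local Open Scope ring_scope.

(* Truncation of the formal power series e^t - 1 to degree N: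
   \sum_{j=1}^{N} t^j / j!. *)
Definition expm1_trunc (R : realFieldType) (N : nat) : {poly R} :=
  \poly_(j < N.+1) (if j == 0%N then 0 else (j`!)%:R^-1).

(* Since e^t - 1 + r t has no constant term, the coefficient of t^n in
   its k-th power only depends on the terms of degree <= n, so using the
   truncation expm1_trunc n gives exactly the formal power series
   coefficient. In particular S2r r n k = 0 when n < k. *)
Definition S2r (R : realFieldType) (r : R) (n k : nat) : R :=
  (n`!)%:R / (k`!)%:R * ((expm1_trunc R n + r *: 'X) ^+ k)`_n.

(* Main.v *)
Require Import Defs.
From mathcomp Require Import all_boot all_order all_algebra.
From mathcomp Require Import zify ring.
Import GRing.Theory Num.Theory.
Local Open Scope ring_scope.

Lemma coef_expr_low (R : realFieldType) (p q : {poly R}) (i k : nat) :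
  (forall j, (j <= i)%N -> p`_j = q`_j) -> (p ^+ k)`_i = (q ^+ k)`_i.
Proof.
move=> H; elim: k i H => [|k IH] i H; first by rewrite !expr0.
rewrite !exprS !coefM; apply: eq_bigr => j _.
rewrite H; last by rewrite -ltnS.
by rewrite IH // => j' Hj'; apply: H; apply: leq_trans Hj' (leq_subr _ _).
Qed.

Lemma coef_expr_vanish (R : realFieldType) (p : {poly R}) (m l : nat) :
  p`_0 = 0 -> (l < m)%N -> (p ^+ m)`_l = 0.
Proof.
move=> H0; elim: m l => [|m IH] l //.
move=> Hl; rewrite exprS coefM big1 // => [[j Hj]] _ /=.
case: j Hj => [|j] Hj; first by rewrite H0 mul0r.
rewrite IH ?mulr0 //.
lia.
Qed.

Definition fN {R : realFieldType} (r : R) N := expm1_trunc R N + r *: 'X.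

Lemma fN_coef (R : realFieldType) (r : R) N j : (j <= N)%N ->
  (fN r N)`_j = (if j == 0%N then 0 else (j`!)%:R^-1) + r * (j == 1%N)%:R.
Proof.
move=> Hj; rewrite /fN /expm1_trunc coefD coefZ coef_poly ltnS Hj coefX.
by [].
Qed.

Lemma S2r_fN (R : realFieldType) (r : R) N l k : (l <= N)%N ->
  S2r r l k = (l`!)%:R / (k`!)%:R * ((fN r N) ^+ k)`_l.
Proof.
move=> Hl; rewrite /S2r; congr (_ * _); apply: coef_expr_low => j Hj.
rewrite -/(fN r l) !fN_coef //; exact: leq_trans Hl.
Qed.

Theorem theorem5 (R : realFieldType) (r : R) (n m k : nat) :
  (m + k <= n)%N ->
  ('C(m + k, m))%:R * S2r r n (m + k)
  = \sum_(m <= l < n.+1) ('C(n, l))%:R * S2r r l m * S2r r (n - l) k.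
Proof.
move=> Hmk.
have H0 : (fN r n)`_0 = 0 by rewrite fN_coef // mulr0 addr0.
have Hmn : (m <= n.+1)%N by apply: leq_trans (leq_addr k m) _; apply: ltnW.
rewrite (@S2r_fN _ _ n) // exprD coefM.
transitivity (\sum_(0 <= l < n.+1) ('C(n, l))%:R * S2r r l m * S2r r (n - l) k); last first.
  rewrite (@big_cat_nat _ _ _ m 0 n.+1 _ _ (leq0n m) Hmn) /=.
  rewrite big_nat_cond big1 ?add0r // => l /andP[/andP[_ Hl] _].
  have Hln : (l <= n)%N by lia.
  by rewrite (@S2r_fN _ _ n l) // coef_expr_vanish // mulr0 mulr0 mul0r.
rewrite big_mkord !mulr_sumr; apply: eq_bigr => [[i Hi]] _ /=.
rewrite ltnS in Hi.
rewrite (@S2r_fN _ _ n i) // (@S2r_fN _ _ n (n - i)) ?leq_subr //.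
have Fn := bin_fact Hi.
have Fmk := bin_fact (leq_addr k m). rewrite addKn in Fmk.
rewrite -Fn -Fmk !natrM.
have nz : forall a, (a`!)%:R != 0 :> R by move=> a; rewrite pnatr_eq0 -lt0n fact_gt0.
have nzC : ('C(m + k, m))%:R != 0 :> R by rewrite pnatr_eq0 -lt0n bin_gt0 leq_addr.
field.
by rewrite nzC !nz.
Qed.
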